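(* Let $K$ be a field with at least $4$ elements and $S$ a smooth cubic surface over $K$. Let $\ell$ be a $K$-line contained in $S$, and let $P\in\ell(K)$ be a point that lies on no other line contained in $S$. Then $\ell(K)\subseteq\Gamma_P(K)\subseteq\mathrm{Span}(P)$.
   Context: A smooth cubic surface $S$ over $K$ is a nonsingular surface in $\mathbb{P}^3$ defined by a homogeneous cubic $F$ over $K$. A $K$-line is a line in $\mathbb{P}^3$ defined over $K$; lines ''on $S$''/''contained in $S$'' are lines over $\overline{K}$. For $P\in S(\overline{K})$, $\Pi_P$ is the tangent plane to $S$ at $P$ (given by $\nabla F(P)\cdot x=0$) and $\Gamma_P$ is the plane cubic curve $S\cap\Pi_P$. For a line $\ell\not\subset S$, $\ell\cdot S=P+Q+R$ with multiplicity. For $B\subseteq S(K)$ define $B_0=B$ and $B_{n+1}$ as the set of $R\in S(K)$ such that either $R\in B_n$ or there exist $P,Q\in B_n$ and a $K$-line $\ell\not\subset S$ with $\ell\cdot S=P+Q+R$; $\mathrm{Span}(B)=\bigcup_n B_n$, and $\mathrm{Span}(P)=\mathrm{Span}(\{P\})$. *)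

(* Defs.v *)
From HB Require Import structures.
From mathcomp Require Import all_boot all_order all_algebra all_field.
Set Implicit Arguments. Unset Strict Implicit. Unset Printing Implicit Defensive.
Import Order.TTheory GRing.Theory Num.Theory.
Local Open Scope ring_scope.

(* A homogeneous cubic form in x_0..x_3 over R, given by a coefficient
   array: F(x) = sum_{i,j,k} c i j k * x_i x_j x_k.  Every cubic form
   arises this way (representation not unique, but evaluation and
   formal derivatives are well defined). *)
Definition cubic (R : Type) := 'I_4 -> 'I_4 -> 'I_4 -> R.

Definition map_cubic (R S : Type) (f : R -> S) (c : cubic R) : cubic S :=
  fun i j k => f (c i j k).

Definition evalF (R : comNzRingType) (c : cubic R) (x : 'rV[R]_4) : R :=
  \sum_(i < 4) \sum_(j < 4) \sum_(k < 4) c i j k * x 0 i * x 0 j * x 0 k.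

Definition dF (R : comNzRingType) (c : cubic R) (m : 'I_4) (x : 'rV[R]_4) : R :=
  \sum_(i < 4) \sum_(j < 4) \sum_(k < 4) c i j k *
    ((i == m)%:R * x 0 j * x 0 k + (j == m)%:R * x 0 i * x 0 k
     + (k == m)%:R * x 0 i * x 0 j).

Definition smooth_cubic (L : fieldType) (c : cubic L) : Prop :=
  forall x : 'rV[L]_4, x != 0 -> evalF c x = 0 -> exists m, dF c m x != 0.

(* A line of P^3 over a field is the row space of a rank-2 2x4 matrix;
   a point x lies on it iff (x <= M)%MS. *)
Definition is_line (F : fieldType) (M : 'M[F]_(2,4)) : Prop := \rank M = 2%N.

Definition line_in_surface (F : fieldType) (c : cubic F) (M : 'M[F]_(2,4)) : Prop :=
  forall x : 'rV[F]_4, (x <= M)%MS -> evalF c x = 0.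

(* Restriction of F to the line with basis rows u = M_0, v = M_1, as the
   dehomogenised binary cubic form f(X,1) = F(X u + v) in {poly K}.
   (A binary cubic form is determined by this polynomial.) *)
Definition line_form (K : fieldType) (c : cubic K) (M : 'M[K]_(2,4)) : {poly K} :=
  evalF (map_cubic polyC c) (\row_i ('X * (M ord0 i)%:P + (M ord_max i)%:P)).

(* l . S = P + Q + R for the K-line M not contained in S, with multiplicity:
   writing P = s1 u + t1 v etc., F(s u + t v) = lam * prod (t_i s - s_i t)
   with lam <> 0 (dehomogenised at t = 1). *)
Definition line_cuts (K : fieldType) (c : cubic K) (M : 'M[K]_(2,4))
  (p q r : 'rV[K]_4) : Prop :=
  is_line M /\ p != 0 /\ q != 0 /\ r != 0 /\
  exists (s1 t1 s2 t2 s3 t3 lam : K),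
    [/\ p = s1 *: row ord0 M + t1 *: row ord_max M,
        q = s2 *: row ord0 M + t2 *: row ord_max M,
        r = s3 *: row ord0 M + t3 *: row ord_max M,
        lam != 0 &
        line_form c M =
          lam *: ((t1 *: 'X - s1%:P) * (t2 *: 'X - s2%:P) * (t3 *: 'X - s3%:P))].

(* Span(B) for B a set of K-points (given by representative vectors):
   the least set containing B and closed under third intersection points. *)
Inductive in_Span (K : fieldType) (c : cubic K) (B : 'rV[K]_4 -> Prop)
  : 'rV[K]_4 -> Prop :=
| Span_base : forall x, B x -> in_Span c B x
| Span_step : forall (p q r : 'rV[K]_4) (M : 'M[K]_(2,4)),
    in_Span c B p -> in_Span c B q -> line_cuts c M p q r -> in_Span c B r.

(* The projective point P, as a set of representatives. *)
Definition proj_point (K : fieldType) (P : 'rV[K]_4) : 'rV[K]_4 -> Prop :=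
  fun x => x != 0 /\ exists a : K, x = a *: P.

Definition Gamma_pt (K : fieldType) (c : cubic K) (P x : 'rV[K]_4) : Prop :=
  [/\ x != 0, evalF c x = 0 & \sum_(m < 4) dF c m P * x 0 m = 0].

(* Main.v *)
Require Import Defs.
From HB Require Import structures.
From mathcomp Require Import all_boot all_order all_algebra all_field.
Import GRing.Theory.
Local Open Scope ring_scope.
From mathcomp Require Import ring.
Set Implicit Arguments. Unset Strict Implicit. Unset Printing Implicit Defensive.


Section Gen.
Variable R : comNzRingType.
Implicit Types (c : cubic R) (x y z w : 'rV[R]_4).

Definition Bf c x y : R := \sum_(m < 4) dF c m x * y 0 m.
Definition Tf c x y z : R :=
  \sum_(i < 4) \sum_(j < 4) \sum_(k < 4) c i j k *
   (x 0 i * y 0 j * z 0 k + x 0 i * z 0 j * y 0 k + y 0 i * x 0 j * z 0 k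
  + y 0 i * z 0 j * x 0 k + z 0 i * x 0 j * y 0 k + z 0 i * y 0 j * x 0 k).

Lemma sum_delta (F : 'I_4 -> R) (i : 'I_4) :
  \sum_(m < 4) (i == m)%:R * F m = F i.
Proof.
rewrite (bigD1 i) //= eqxx mul1r big1 ?addr0 // => m /negbTE.
by rewrite eq_sym => ->; rewrite mul0r.
Qed.

Lemma BfE c x y : Bf c x y = \sum_(i < 4) \sum_(j < 4) \sum_(k < 4) c i j k *
   (y 0 i * x 0 j * x 0 k + x 0 i * y 0 j * x 0 k + x 0 i * x 0 j * y 0 k).
Proof.
rewrite /Bf /dF.
under eq_bigr => m _ do rewrite mulr_suml.
rewrite exchange_big; apply: eq_bigr => i _.
under eq_bigr => m _ do rewrite mulr_suml.
rewrite exchange_big; apply: eq_bigr => j _.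
under eq_bigr => m _ do rewrite mulr_suml.
rewrite exchange_big; apply: eq_bigr => k _.
have E : forall m : 'I_4, c i j k * ((i == m)%:R * x 0 j * x 0 k + (j == m)%:R * x 0 i * x 0 k
     + (k == m)%:R * x 0 i * x 0 j) * y 0 m =
   (i == m)%:R * (c i j k * x 0 j * x 0 k * y 0 m) +
   (j == m)%:R * (c i j k * x 0 i * x 0 k * y 0 m) +
   (k == m)%:R * (c i j k * x 0 i * x 0 j * y 0 m) by move=> m; ring.
under eq_bigr => m _ do rewrite E.
rewrite !big_split /= !sum_delta; ring.
Qed.


Ltac expand3 := rewrite ?mulr_sumr -?big_split /=; apply: eq_bigr => ? _;
  rewrite ?mulr_sumr -?big_split /=; apply: eq_bigr => ? _;
  rewrite ?mulr_sumr -?big_split /=; apply: eq_bigr => ? _; rewrite ?mxE.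

Lemma F3exp c x y z a b s : evalF c (a *: x + b *: y + s *: z) =
  a^+3 * evalF c x + b^+3 * evalF c y + s^+3 * evalF c z
  + a^+2*b * Bf c x y + a*b^+2 * Bf c y x + a^+2*s*Bf c x z + a*s^+2*Bf c z x
  + b^+2*s*Bf c y z + b*s^+2*Bf c z y + a*b*s*Tf c x y z.
Proof. rewrite /evalF !BfE /Tf; expand3; ring. Qed.

Lemma F2exp c x y a b : evalF c (a *: x + b *: y) =
  a^+3 * evalF c x + a^+2*b * Bf c x y + a*b^+2 * Bf c y x + b^+3 * evalF c y.
Proof.
have := F3exp c x y 0 a b 0; rewrite scale0r addr0 => ->.
rewrite /evalF !BfE /Tf; expand3; ring.
Qed.

Lemma B3exp c x y z w a b s : Bf c (a *: x + b *: y + s *: z) w =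
  a^+2 * Bf c x w + b^+2 * Bf c y w + s^+2 * Bf c z w
  + a*b * Tf c x y w + a*s * Tf c x z w + b*s*Tf c y z w.
Proof. rewrite !BfE /Tf; expand3; ring. Qed.

Lemma B2exp c x y w a b : Bf c (a *: x + b *: y) w =
  a^+2 * Bf c x w + a*b * Tf c x y w + b^+2 * Bf c y w.
Proof. rewrite !BfE /Tf; expand3; ring. Qed.

Lemma Blin c x y z a b : Bf c x (a *: y + b *: z) = a * Bf c x y + b * Bf c x z.
Proof. rewrite !BfE; expand3; ring. Qed.

Lemma Blin3 c x y z w a b s : Bf c x (a *: y + b *: z + s *: w) =
  a * Bf c x y + b * Bf c x z + s * Bf c x w.
Proof. rewrite !BfE; expand3; ring. Qed.

Lemma Tlin3 c x y z w a b : Tf c x y (a *: z + b *: w) = a * Tf c x y z + b * Tf c x y w.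
Proof. rewrite /Tf; expand3; ring. Qed.

Lemma Tlin1 c x y z w a b : Tf c (a *: z + b *: w) x y = a * Tf c z x y + b * Tf c w x y.
Proof. rewrite /Tf; expand3; ring. Qed.

Lemma TC12 c x y z : Tf c x y z = Tf c y x z.
Proof. rewrite /Tf; expand3; ring. Qed.

Lemma TC23 c x y z : Tf c x y z = Tf c x z y.
Proof. rewrite /Tf; expand3; ring. Qed.

Lemma Txxy c x y : Tf c x x y = 2 * Bf c x y.
Proof. rewrite /Tf BfE; expand3; ring. Qed.

Lemma Bxx c x : Bf c x x = 3 * evalF c x.
Proof. rewrite /evalF BfE; expand3; ring. Qed.

End Gen.

Section Map.
Variables (R S : comNzRingType) (f : {rmorphism R -> S}).
Lemma evalF_map c x : evalF (map_cubic f c) (map_mx f x) = f (evalF c x).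
Proof.
rewrite /evalF rmorph_sum; apply: eq_bigr => i _; rewrite rmorph_sum; apply: eq_bigr => j _.
rewrite rmorph_sum; apply: eq_bigr => k _; rewrite !mxE /map_cubic !rmorphM //.
Qed.
Lemma Bf_map c x y : Bf (map_cubic f c) (map_mx f x) (map_mx f y) = f (Bf c x y).
Proof.
rewrite !BfE rmorph_sum; apply: eq_bigr => i _; rewrite rmorph_sum; apply: eq_bigr => j _.
rewrite rmorph_sum; apply: eq_bigr => k _; rewrite !mxE /map_cubic !(rmorphM, rmorphD) //.
Qed.
Lemma Tf_map c x y z : Tf (map_cubic f c) (map_mx f x) (map_mx f y) (map_mx f z) = f (Tf c x y z).
Proof.
rewrite /Tf rmorph_sum; apply: eq_bigr => i _; rewrite rmorph_sum; apply: eq_bigr => j _.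
rewrite rmorph_sum; apply: eq_bigr => k _; rewrite !mxE /map_cubic !(rmorphM, rmorphD) //.
Qed.
Lemma dF_map c m x : dF (map_cubic f c) m (map_mx f x) = f (dF c m x).
Proof.
rewrite /dF rmorph_sum; apply: eq_bigr => i _; rewrite rmorph_sum; apply: eq_bigr => j _.
rewrite rmorph_sum; apply: eq_bigr => k _; rewrite !mxE /map_cubic !(rmorphM, rmorphD, rmorph_nat) //.
Qed.
End Map.



Section Mx.
Variable F : fieldType.
Implicit Types (u v w x y z : 'rV[F]_4).

Definition lin2 u v : 'M[F]_(2,4) :=
  \matrix_(i < 2, j < 4) (if i == ord0 then u 0 j else v 0 j).

Lemma lin2_0 u v : row ord0 (lin2 u v) = u.
Proof. by apply/rowP => j; rewrite !mxE. Qed.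
Lemma lin2_1 u v : row ord_max (lin2 u v) = v.
Proof. by apply/rowP => j; rewrite !mxE. Qed.
Lemma lin2_0e u v j : lin2 u v ord0 j = u 0 j.
Proof. by rewrite !mxE. Qed.
Lemma lin2_1e u v j : lin2 u v ord_max j = v 0 j.
Proof. by rewrite !mxE. Qed.

Lemma mul_lin2 (D : 'rV[F]_2) u v : D *m lin2 u v = D 0 ord0 *: u + D 0 ord_max *: v.
Proof.
rewrite mulmx_sum_row big_ord_recr big_ord1 /=; apply/rowP => j; rewrite !mxE /=.
by congr (D 0 _ * _ + _); apply: val_inj.
Qed.

Lemma sub_lin2 x u v : (x <= lin2 u v)%MS -> exists a b, x = a *: u + b *: v.
Proof. by case/submxP => D ->; rewrite mul_lin2; eexists; eexists. Qed.

Lemma lin2_sub a b u v : ((a *: u + b *: v)%R <= lin2 u v)%MS.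
Proof.
apply: addmx_sub; apply: scalemx_sub; [rewrite -{1}(lin2_0 u v) | rewrite -{1}(lin2_1 u v)];
  exact: row_sub.
Qed.

Definition free2 u v := forall a b, a *: u + b *: v = 0 -> a = 0 /\ b = 0.

Lemma free_rowfree m n (M : 'M[F]_(m, n)) :
  (forall D : 'rV_m, D *m M = 0 -> D = 0) -> row_free M.
Proof.
move=> H; rewrite -kermx_eq0; apply/eqP/row_matrixP => i.
by rewrite row0; apply: H; rewrite -row_mul mulmx_ker row0.
Qed.

Lemma free2_line u v : free2 u v -> is_line (lin2 u v).
Proof.
move=> H; rewrite /is_line; apply/eqP; apply: (free_rowfree (M := lin2 u v)) => D.
rewrite mul_lin2 => /H [h0 h1]; apply/rowP => i; rewrite mxE.
case: i => [[|[|//]] Hi]; [rewrite -h0 | rewrite -h1]; congr (D _ _); exact: val_inj.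
Qed.

Definition matL n (s : seq 'rV[F]_4) : 'M[F]_(n, 4) := \matrix_(i < n, j < 4) (nth 0 s i) 0 j.

Lemma row_matL n s (i : 'I_n) : row i (matL n s) = nth 0 s i.
Proof. by apply/rowP => j; rewrite !mxE. Qed.

Lemma mul_matL n s (D : 'rV_n) : D *m matL n s = \sum_(i < n) D 0 i *: nth 0 s i.
Proof. by rewrite mulmx_sum_row; apply: eq_bigr => i _; rewrite row_matL. Qed.

Lemma free4_coef u v w z a b c d : row_free (matL 4 [:: u; v; w; z]) ->
  a *: u + b *: v + c *: w + d *: z = 0 -> [/\ a = 0, b = 0, c = 0 & d = 0].
Proof.
move=> Hf H.
pose D : 'rV[F]_4 := \row_i (nth 0 [:: a; b; c; d] i).
have HD : D = 0.
  apply/eqP; rewrite -(mulmx_free_eq0 _ Hf); apply/eqP.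
  by rewrite mul_matL !big_ord_recr big_ord0 /= !mxE /= add0r -H.
have E : forall i : 'I_4, D 0 i = 0 by move=> i; rewrite HD mxE.
by move: (E 0) (E 1) (E 2) (E 3); rewrite !mxE /=.
Qed.

Lemma free3_coef u v w a b c : row_free (matL 3 [:: u; v; w]) ->
  a *: u + b *: v + c *: w = 0 -> [/\ a = 0, b = 0 & c = 0].
Proof.
move=> Hf H.
pose D : 'rV[F]_3 := \row_i (nth 0 [:: a; b; c] i).
have HD : D = 0.
  apply/eqP; rewrite -(mulmx_free_eq0 _ Hf); apply/eqP.
  by rewrite mul_matL !big_ord_recr big_ord0 /= !mxE /= add0r -H.
have E : forall i : 'I_3, D 0 i = 0 by move=> i; rewrite HD mxE.
by move: (E 0) (E 1) (E 2); rewrite !mxE /=.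
Qed.

Lemma free3_of u v w : (forall a b c, a *: u + b *: v + c *: w = 0 -> [/\ a = 0, b = 0 & c = 0]) ->
  row_free (matL 3 [:: u; v; w]).
Proof.
move=> H; apply: free_rowfree => D; rewrite mul_matL !big_ord_recr big_ord0 /= add0r.
move/H => [h0 h1 h2]; apply/rowP => i; rewrite mxE.
case: i => [[|[|[|//]]] Hi]; [rewrite -h0 | rewrite -h1 | rewrite -h2]; congr (D _ _); exact: val_inj.
Qed.

Lemma free2_coef u v a b : free2 u v -> a *: u + b *: v = 0 -> a = 0 /\ b = 0.
Proof. by move=> H; apply: H. Qed.


Lemma complete n s : size s = n -> (n < 4)%N -> row_free (matL n s) ->
  exists z, row_free (matL n.+1 (rcons s z)).
Proof.
move=> Hs Hn Hf.
have [i Hi] : exists i : 'I_4, ~~ (row i 1%:M <= matL n s)%MS.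
  apply/existsP; rewrite -negb_forall; apply/negP => /forallP H.
  have : (1%:M <= matL n s)%MS by apply/row_subP => i; exact: H.
  move/mxrankS; rewrite mxrank1 => H4.
  have := leq_trans H4 (rank_leq_row _); by rewrite leqNgt Hn.
exists (row i 1%:M).
rewrite /row_free; apply/eqP/anti_leq/andP; split; first exact: rank_leq_row.
have Hr : \rank (matL n s) = n by apply/eqP.
have H1 : (matL n s + row i 1%:M <= matL n.+1 (rcons s (row i 1%:M)))%MS.
  rewrite addsmx_sub; apply/andP; split.
    apply/row_subP => j; rewrite row_matL.
    apply: (submx_trans _ (row_sub (widen_ord (leqnSn n) j) _)).
    by rewrite row_matL /= nth_rcons Hs ltn_ord submx_refl.
  apply: (submx_trans _ (row_sub ord_max _)).
  by rewrite row_matL /= nth_rcons Hs ltnn eqxx submx_refl.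
have H2 : (matL n s < matL n s + row i 1%:M)%MS.
  rewrite ltmxE addsmxSl /=; apply/negP => H3; move/negP: Hi; apply.
  exact: submx_trans (addsmxSr _ _) H3.
have := rank_ltmx H2; rewrite Hr => H3.
exact: leq_trans H3 (mxrankS H1).
Qed.


Lemma grad0 (c : cubic F) z s : row_free (matL 4 s) ->
  (forall i : 'I_4, Bf c z (nth 0 s i) = 0) -> forall m, dF c m z = 0.
Proof.
move=> Hf H m.
pose gv : 'rV[F]_4 := \row_m dF c m z.
have Hg : gv *m (matL 4 s)^T = 0.
  apply/rowP => i; rewrite !mxE; transitivity (Bf c z (nth 0 s i)); last exact: H.
  by rewrite /Bf; apply: eq_bigr => j _; rewrite !mxE.
have Hf' : row_free (matL 4 s)^T by rewrite /row_free mxrank_tr.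
move: Hg => /eqP; rewrite (mulmx_free_eq0 _ Hf') => /eqP Hg.
by have := congr1 (fun M : 'rV[F]_4 => M 0 m) Hg; rewrite !mxE.
Qed.


Lemma comb_sub m (M : 'M[F]_(m, 4)) u v a b : a *: u + b *: v = 0 -> b != 0 ->
  (u <= M)%MS -> (v <= M)%MS.
Proof.
move=> H Hb Hu.
have -> : v = (- (b^-1 * a)) *: u.
  apply: (scalerI Hb); rewrite scalerA mulrN mulrA divff // mul1r scaleNr.
  by apply/eqP; rewrite -addr_eq0 addrC H.
exact: scalemx_sub.
Qed.

Lemma free2_of_sub m (M : 'M[F]_(m, 4)) u v : u != 0 -> (u <= M)%MS -> ~~ (v <= M)%MS -> free2 u v.
Proof.
move=> Hu HuM HvM a b H.
have [b0|b0] := eqVneq b 0; last by move/negP: HvM; case; exact: comb_sub H b0 HuM.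
split => //; move: H; rewrite b0 scale0r addr0 => /eqP; rewrite scaler_eq0 (negbTE Hu) orbF.
by move/eqP.
Qed.

Lemma free4_of u v w z : (forall a b c d, a *: u + b *: v + c *: w + d *: z = 0 ->
   [/\ a = 0, b = 0, c = 0 & d = 0]) -> row_free (matL 4 [:: u; v; w; z]).
Proof.
move=> H; apply: free_rowfree => D; rewrite mul_matL !big_ord_recr big_ord0 /= add0r.
move/H => [h0 h1 h2 h3]; apply/rowP => i; rewrite mxE.
case: i => [[|[|[|[|//]]]] Hi]; [rewrite -h0 | rewrite -h1 | rewrite -h2 | rewrite -h3];
  congr (D _ _); exact: val_inj.
Qed.

Lemma free2_of u v : free2 u v -> row_free (matL 2 [:: u; v]).
Proof.
move=> H; apply: free_rowfree => D; rewrite mul_matL !big_ord_recr big_ord0 /= add0r.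
move/H => [h0 h1]; apply/rowP => i; rewrite mxE.
case: i => [[|[|//]] Hi]; [rewrite -h0 | rewrite -h1]; congr (D _ _); exact: val_inj.
Qed.

Lemma sub_matL2 x u v : (x <= matL 2 [:: u; v])%MS -> exists a b, x = a *: u + b *: v.
Proof.
case/submxP => D ->; rewrite mul_matL !big_ord_recr big_ord0 /= add0r.
by eexists; eexists.
Qed.

Lemma free4_perm u v w z : row_free (matL 4 [:: u; v; w; z]) -> row_free (matL 4 [:: u; v; z; w]).
Proof.
move=> H; apply: free4_of => a b c d E.
have [] := free4_coef (a:=a) (b:=b) (c:=d) (d:=c) H; last by move=> -> -> -> ->.
by rewrite -E; apply/rowP => j; rewrite !mxE; ring.
Qed.

End Mx.

Lemma map_matL (K L : fieldType) (f : {rmorphism K -> L}) n s :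
  map_mx f (matL n s) = matL n (map (map_mx f) s).
Proof.
apply/matrixP => i j; rewrite !mxE.
case: (ltnP i (size s)) => Hi.
  by rewrite (nth_map 0) // mxE.
by rewrite nth_default // [in RHS]nth_default ?size_map // !mxE rmorph0.
Qed.



Section Cuts.
Variable K : fieldType.
Variable c : cubic K.
Implicit Types (u v w x y z p q r : 'rV[K]_4).
Local Notation FK := (evalF c).
Local Notation BK := (Bf c).

Lemma line_form_lin2 p q : line_form c (lin2 p q) =
  'X^3 * (FK p)%:P + 'X^2 * (BK p q)%:P + 'X * (BK q p)%:P + (FK q)%:P.
Proof.
rewrite /line_form.
have -> : \row_i ('X * (lin2 p q ord0 i)%:P + (lin2 p q ord_max i)%:P) =
   'X *: map_mx polyC p + 1 *: map_mx polyC q.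
  by apply/rowP => j; rewrite !mxE /= mul1r.
rewrite (F2exp (map_cubic polyC c)) !evalF_map !Bf_map; ring.
Qed.

Lemma free2_nz1 u v : free2 u v -> u != 0.
Proof.
move=> H; apply/eqP => Hu; have := H 1 0; rewrite Hu scaler0 scale0r addr0.
by move=> /(_ erefl) [/eqP]; rewrite oner_eq0.
Qed.
Lemma free2_nz2 u v : free2 u v -> v != 0.
Proof.
move=> H; apply/eqP => Hu; have := H 0 1; rewrite Hu scaler0 scale0r addr0.
by move=> /(_ erefl) [_ /eqP]; rewrite oner_eq0.
Qed.

Lemma cut1 p q : free2 p q -> FK p = 0 -> FK q = 0 -> BK p q = 0 -> BK q p != 0 ->
  line_cuts c (lin2 p q) p p q.
Proof.
move=> Hf Hp Hq Hpq Hqp; split; first exact: free2_line.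
split; first exact: free2_nz1 Hf. split; first exact: free2_nz1 Hf.
split; first exact: free2_nz2 Hf.
exists 1, 0, 1, 0, 0, 1, (BK q p); split => //; rewrite ?lin2_0 ?lin2_1.
- by rewrite scale1r scale0r addr0.
- by rewrite scale1r scale0r addr0.
- by rewrite scale1r scale0r add0r.
rewrite line_form_lin2 Hp Hq Hpq -mul_polyC !scale0r !scale1r !polyC0; ring.
Qed.

Lemma cut2 p q : free2 p q -> FK p = 0 -> FK q = 0 -> BK p q != 0 ->
  line_cuts c (lin2 p q) q (- BK q p *: p + BK p q *: q) p.
Proof.
move=> Hf Hp Hq Hpq; split; first exact: free2_line.
split; first exact: free2_nz2 Hf.
split.
  apply/eqP => H; have [_ /eqP] := Hf _ _ H; by rewrite (negbTE Hpq).
split; first exact: free2_nz1 Hf.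
exists 0, 1, (- BK q p), (BK p q), 1, 0, (-1); split => //; rewrite ?lin2_0 ?lin2_1.
- by rewrite scale1r scale0r add0r.
- by [].
- by rewrite scale1r scale0r addr0.
- by apply/eqP => H; move: (congr1 (fun x : K => - x) H); rewrite opprK oppr0 => /eqP; rewrite oner_eq0.
rewrite line_form_lin2 Hp Hq -mul_polyC !scale0r !scale1r !polyC0 !polyCN polyC1 -!mul_polyC; ring.
Qed.

End Cuts.


Lemma quad_root (L : closedFieldType) (a b d : L) : a != 0 -> exists x, a * x ^+ 2 + b * x + d = 0.
Proof.
move=> Ha; pose p := a *: 'X^2 + b *: 'X + d%:P.
have : size p != 1%N.
  apply/negP => /eqP Hs.
  have : p`_2 = 0 by rewrite nth_default // Hs.
  rewrite /p !coefD !coefZ coefXn coefX coefC /= mulr1 mulr0 !addr0 => /eqP.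
  by rewrite (negbTE Ha).
case/closed_rootP => x; rewrite /root /p !hornerE => /eqP Hx; exists x.
by rewrite -Hx expr2 mulrA.
Qed.

Lemma bin_root (L : closedFieldType) (q2 q1 q0 : L) :
  exists a b, (a != 0) || (b != 0) /\ a ^+ 2 * q2 + a * b * q1 + b ^+ 2 * q0 = 0.
Proof.
have [->|H] := eqVneq q2 0.
  by exists 1, 0; rewrite oner_eq0 /=; split => //; ring.
have [x Hx] := quad_root q1 q0 H.
exists x, 1; rewrite oner_eq0 orbT; split => //; rewrite -Hx; ring.
Qed.

Section Main.
Variables (K : fieldType) (L : closedFieldType) (iota : {rmorphism K -> L}).
Hypothesis K4 : exists a b d e : K, uniq [:: a; b; d; e].
Variable c : cubic K.
Hypothesis smooth : smooth_cubic (map_cubic iota c).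
Variable A : 'M[K]_(2,4).
Hypothesis lineA : is_line A.
Hypothesis A_in_S : line_in_surface (map_cubic iota c) (map_mx iota A).
Variable P : 'rV[K]_4.
Hypothesis P_nz : P != 0.
Hypothesis P_on : (P <= A)%MS.
Hypothesis P_unique : forall B : 'M[L]_(2,4), is_line B ->
      line_in_surface (map_cubic iota c) B ->
      (map_mx iota P <= B)%MS -> (B == map_mx iota A)%MS.

Local Notation FK := (evalF c).
Local Notation BK := (Bf c).
Local Notation TK := (Tf c).
Local Notation cL := (map_cubic iota c).
Local Notation im x := (map_mx iota x).
Implicit Types (u v w x y z p q r : 'rV[K]_4).

Lemma onA_F x : (x <= A)%MS -> FK x = 0.
Proof.
move=> H; apply: (fmorph_inj iota); rewrite rmorph0 -evalF_map; apply: A_in_S.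
by rewrite map_submx.
Qed.

Lemma three_nz : exists t1 t2 t3 : K,
  t1 != 0 /\ t2 != 0 /\ t3 != 0 /\ t1 != t2 /\ t1 != t3 /\ t2 != t3.
Proof.
case: K4 => a [b [d [e]]] /=; rewrite !inE !negb_or.
case/andP => /and3P [ab ad ae] /andP [/andP [bd be] /andP [de _]].
have [a0|a0] := eqVneq a 0.
  subst a; exists b, d, e; do !split => //; by rewrite eq_sym.
have [b0|b0] := eqVneq b 0.
  subst b; exists a, d, e; do !split => //; by rewrite eq_sym.
have [d0|d0] := eqVneq d 0.
  subst d; exists a, b, e; do !split => //; by rewrite eq_sym.
by exists a, b, d; do !split.
Qed.



Lemma exists_e : exists e : K, e != 0 /\ e != 1.
Proof.
have [t1 [t2 [t3 [h1 [h2 [h3 [h12 _]]]]]]] := three_nz.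
have [E|E] := eqVneq t1 1; last by exists t1.
by exists t2; split => //; rewrite -E eq_sym.
Qed.

Lemma exists_t (pg rg : K) : pg != 0 -> exists t, t != 0 /\ t ^+ 2 * rg != pg.
Proof.
move=> Hp.
have [t1 [t2 [t3 [h1 [h2 [h3 [h12 [h13 h23]]]]]]]] := three_nz.
have [E1|E1] := eqVneq (t1 ^+ 2 * rg) pg; last by exists t1.
have [E2|E2] := eqVneq (t2 ^+ 2 * rg) pg; last by exists t2.
have [E3|E3] := eqVneq (t3 ^+ 2 * rg) pg; last by exists t3.
exfalso.
have Hr : rg != 0 by apply: contraNneq Hp => Hr; rewrite -E1 Hr mulr0.
have sq : forall u v : K, u ^+ 2 * rg = pg -> v ^+ 2 * rg = pg -> u != v -> v = - u.
  move=> u v Eu Ev Huv.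
  have E0 : (u - v) * (u + v) * rg = 0.
    have -> : (u - v) * (u + v) * rg = u ^+ 2 * rg - v ^+ 2 * rg by ring.
    by rewrite Eu Ev subrr.
  move/eqP: E0; rewrite !mulf_eq0 (negbTE Hr) orbF subr_eq0 (negbTE Huv) /= => /eqP H.
  by apply/eqP; rewrite -addr_eq0 addrC H.
have := sq _ _ E1 E2 h12; have := sq _ _ E1 E3 h13 => <- E.
by move/eqP: h23; apply; rewrite E.
Qed.

Lemma onA_B x y : (x <= A)%MS -> (y <= A)%MS -> BK x y = 0.
Proof.
move=> Hx Hy; have [e [e0 e1]] := exists_e.
have H : forall t, t * BK x y + t ^+ 2 * BK y x = 0.
  move=> t; have := onA_F (addmx_sub (scalemx_sub 1 Hx) (scalemx_sub t Hy)).
  rewrite F2exp (onA_F Hx) (onA_F Hy) => <-; ring.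
have := H 1; have := H e => h2 h1.
have : BK x y * (e * (e - 1)) = 0.
  have -> : BK x y * (e * (e - 1)) = e ^+ 2 * (1 * BK x y + 1 ^+ 2 * BK y x) - (e * BK x y + e ^+ 2 * BK y x) by ring.
  by rewrite h1 h2 mulr0 subrr.
by move/eqP; rewrite !mulf_eq0 (negbTE e0) subr_eq0 (negbTE e1) /= orbF => /eqP.
Qed.

Lemma smooth_K x : x != 0 -> FK x = 0 -> exists m, dF c m x != 0.
Proof.
move=> Hx HF.
have Hx' : im x != 0 by rewrite map_mx_eq0.
have HF' : evalF cL (im x) = 0 by rewrite evalF_map HF rmorph0.
have [m Hm] := smooth Hx' HF'.
by exists m; move: Hm; rewrite dF_map fmorph_eq0.
Qed.

Lemma freeL_map s : row_free (matL 4 s) -> row_free (matL 4 (map (map_mx iota) s)).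
Proof. by rewrite -map_matL /row_free mxrank_map. Qed.

Lemma sing_contra u1 u2 w1 w2 : (u1 <= A)%MS -> (u2 <= A)%MS ->
  row_free (matL 4 [:: u1; u2; w1; w2]) ->
  BK u1 w1 = 0 -> TK u1 u2 w1 = 0 -> BK u2 w1 = 0 -> False.
Proof.
move=> H1 H2 Hf B1 T1 B2.
have [a [b [Hab Hq]]] := bin_root (iota (BK u1 w2)) (iota (TK u1 u2 w2)) (iota (BK u2 w2)).
have HfL := freeL_map Hf; rewrite /= in HfL.
pose z := a *: im u1 + b *: im u2.
have Hz : z != 0.
  apply/eqP => Hz0.
  have [] := free4_coef (a:=a) (b:=b) (c:=0) (d:=0) HfL; first by rewrite !scale0r !addr0.
  by move=> Ha Hb _ _; move: Hab; rewrite Ha Hb eqxx.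
have HzS : evalF cL z = 0.
  apply: A_in_S; apply: addmx_sub; apply: scalemx_sub; by rewrite map_submx.
have [m Hm] := smooth Hz HzS.
suff : dF cL m z = 0 by move/eqP; rewrite (negbTE Hm).
apply: (grad0 HfL) => -[[|[|[|[|//]]]] Hi] /=; rewrite /z B2exp !Bf_map !Tf_map.
- by rewrite TC23 Txxy Bxx (onA_F H1) (onA_B H1 H2) (onA_B H2 H1) !(mulr0, rmorph0) !addr0.
- by rewrite TC12 TC23 Txxy Bxx (onA_F H2) (onA_B H1 H2) (onA_B H2 H1) !(mulr0, rmorph0) !addr0.
- by rewrite B1 T1 B2 !(mulr0, rmorph0) !addr0.
- by rewrite -Hq; ring.
Qed.


Lemma no_line_L (v : 'rV[L]_4) : ~~ (v <= im A)%MS -> evalF cL v = 0 ->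
  Bf cL (im P) v = 0 -> Bf cL v (im P) = 0 -> False.
Proof.
move=> Hv HF H1 H2.
have HPL : im P != 0 by rewrite map_mx_eq0.
have HPA : (im P <= im A)%MS by rewrite map_submx.
have Hfree := free2_of_sub HPL HPA Hv.
have HS : line_in_surface cL (lin2 (im P) v).
  move=> x /sub_lin2 [a [b ->]]; rewrite F2exp HF H1 H2 evalF_map (onA_F P_on) rmorph0.
  by rewrite !mulr0 !addr0.
have HP : (im P <= lin2 (im P) v)%MS.
  by apply: (submx_trans _ (row_sub ord0 _)); rewrite lin2_0 submx_refl.
move: (P_unique (free2_line Hfree) HS HP) => /andP [Hsub _].
move/negP: Hv; apply; apply: submx_trans Hsub.
by apply: (submx_trans _ (row_sub ord_max _)); rewrite lin2_1 submx_refl.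
Qed.

Lemma span_P : in_Span c (proj_point P) P.
Proof. by apply: Span_base; split => //; exists 1; rewrite scale1r. Qed.

Lemma Gamma_out x : Gamma_pt c P x -> ~~ (x <= A)%MS -> in_Span c (proj_point P) x.
Proof.
case=> Hx HF HB HxA.
have HBPx : BK P x = 0 by rewrite -HB.
have Hfree := free2_of_sub P_nz P_on HxA.
have Hxp : BK x P != 0.
  apply/negP => /eqP H0; apply: (no_line_L (v := im x)).
  - by rewrite map_submx.
  - by rewrite evalF_map HF rmorph0.
  - by rewrite Bf_map HBPx rmorph0.
  - by rewrite Bf_map H0 rmorph0.
apply: (Span_step span_P span_P).
exact: cut1 Hfree (onA_F P_on) HF HBPx Hxp.
Qed.

Lemma exists_Q2 : exists Q2, (Q2 <= A)%MS /\ free2 P Q2.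
Proof.
have [i Hi] : exists i, ~~ (row i A <= P)%MS.
  apply/existsP; rewrite -negb_forall; apply/negP => /forallP H.
  have : (A <= P)%MS by apply/row_subP.
  by move/mxrankS; rewrite lineA => H2; have := leq_trans H2 (rank_leq_row P).
exists (row i A); split; first exact: row_sub.
exact: free2_of_sub P_nz (submx_refl P) Hi.
Qed.

Lemma A_span Q2 : (Q2 <= A)%MS -> free2 P Q2 ->
  forall z, (z <= A)%MS -> exists a b, z = a *: P + b *: Q2.
Proof.
move=> HQ Hf z Hz; apply: sub_matL2; apply: submx_trans Hz _.
have Hs : (matL 2 [:: P; Q2] <= A)%MS.
  by apply/row_subP => -[[|[|//]] Hi]; rewrite row_matL /=.
have := (mxrank_leqif_sup Hs).2; rewrite lineA.
by move: (free2_of Hf); rewrite /row_free => /eqP -> <-.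
Qed.

Lemma make_w Q2 g e : row_free (matL 4 [:: P; Q2; g; e]) -> BK P g != 0 ->
  exists w, BK P w = 0 /\ row_free (matL 4 [:: P; Q2; w; g]).
Proof.
move=> Hb Hg; pose k := BK P e / BK P g.
exists (1 *: e + (- k) *: g); split.
  by rewrite Blin /k; field.
apply: free4_of => a b c0 d E.
have [] := free4_coef (a:=a) (b:=b) (c:= d - c0 * k) (d:=c0) Hb.
  by rewrite -E; apply/rowP => j; rewrite !mxE; ring.
move=> -> -> H1 H2; split => //; move: H1; rewrite H2 mul0r subr0 //.
Qed.

Lemma exists_y : exists y, [/\ y != 0, ~~ (y <= A)%MS, FK y = 0 & BK P y = 0].
Proof.
have [Q2 [HQ Hf]] := exists_Q2.
have Hf2 := free2_of Hf.
have [e1 Hf3] := complete (s := [:: P; Q2]) erefl erefl Hf2.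
have [e2 Hf4] := complete (s := [:: P; Q2; e1]) erefl erefl Hf3.
rewrite /= in Hf4.
have HP0 := onA_F P_on.
have HBPP : BK P P = 0 by rewrite Bxx HP0 mulr0.
have HBPQ : BK P Q2 = 0 := onA_B P_on HQ.
have [g [e [Hg Hb]]] : exists g e, BK P g != 0 /\ row_free (matL 4 [:: P; Q2; g; e]).
  have [H1|H1] := eqVneq (BK P e1) 0; last by exists e1, e2.
  have [H2|H2] := eqVneq (BK P e2) 0; last by exists e2, e1; split => //; exact: free4_perm.
  exfalso; have [m Hm] := smooth_K P_nz HP0; move/eqP: Hm; apply.
  by apply: (grad0 Hf4) => -[[|[|[|[|//]]]] Hi] /=.
have [w [HPw Hb']] := make_w Hb Hg.
have Hw : ~~ (w <= A)%MS.
  apply/negP => /(A_span HQ Hf) [a [b Hab]].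
  have [] := free4_coef (a:=a) (b:=b) (c:=-1) (d:=0) Hb'.
    by rewrite Hab; apply/rowP => j; rewrite !mxE; ring.
  by move=> _ _ /eqP; rewrite oppr_eq0 oner_eq0.
have [d [Hd1 [Hd2 Hd3]]] : exists d, BK d P != 0 /\ BK P d = 0 /\ ~~ (d <= A)%MS.
  have [H0|H0] := eqVneq (BK w P) 0; last by exists w.
  have [T1|T1] := eqVneq (TK Q2 w P) 0; last first.
    exists (1 *: Q2 + 1 *: w); split; last split.
    - suff -> : BK (1 *: Q2 + 1 *: w) P = TK Q2 w P by [].
      by rewrite B2exp (onA_B HQ P_on) H0; ring.
    - by rewrite Blin HBPQ HPw !mulr0 addr0.
    apply/negP => Hd; move/negP: Hw; apply.
    have -> : w = (1 *: Q2 + 1 *: w) + (-1) *: Q2 by apply/rowP => j; rewrite !mxE; ring.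
    by apply: addmx_sub => //; apply: scalemx_sub.
  exfalso.
  have [HQw|HQw] := eqVneq (BK Q2 w) 0.
    by apply: (sing_contra P_on HQ Hb' HPw _ HQw); rewrite TC12 TC23.
  have Hnz : iota (BK Q2 w) != 0 by rewrite fmorph_eq0.
  have [al Hal] := quad_root (iota (BK w Q2)) (iota (FK w)) Hnz.
  apply: (no_line_L (v := al *: im Q2 + 1 *: im w)).
  - apply/negP => Hv; move/negP: Hw; apply; rewrite -(map_submx iota).
    have -> : im w = (al *: im Q2 + 1 *: im w) + (- al) *: im Q2.
      by apply/rowP => j; rewrite !mxE; ring.
    by apply: addmx_sub => //; apply: scalemx_sub; rewrite map_submx.
  - by rewrite F2exp !evalF_map !Bf_map (onA_F HQ) rmorph0; apply: (etrans _ Hal); ring.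
  - by rewrite Blin !Bf_map HBPQ HPw rmorph0 !mulr0 addr0.
  - by rewrite B2exp !Bf_map Tf_map (onA_B HQ P_on) T1 H0 rmorph0 !mulr0 !addr0.
exists (FK d *: P + (- BK d P) *: d).
have Hy : ~~ ((FK d *: P + (- BK d P) *: d)%R <= A)%MS.
  apply/negP => Hy; move/negP: Hd3; apply.
  apply: (comb_sub (u := (FK d *: P + (- BK d P) *: d) + (- FK d) *: P) (a := 1) (b := BK d P)) => //.
    by apply/rowP => j; rewrite !mxE; ring.
  by apply: addmx_sub => //; apply: scalemx_sub.
split => //.
- by apply: contraNneq Hy => ->; rewrite sub0mx.
- by rewrite F2exp HP0 Hd2; ring.
- by rewrite Blin HBPP Hd2 !mulr0 addr0.
Qed.

Lemma span_l1 y x : y != 0 -> ~~ (y <= A)%MS -> FK y = 0 -> BK P y = 0 ->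
  (x <= A)%MS -> x != 0 -> BK x y != 0 -> in_Span c (proj_point P) x.
Proof.
move=> Hy0 HyA HFy HPy HxA Hx0 Hxy.
have Hfree := free2_of_sub Hx0 HxA HyA.
have Hcut := cut2 Hfree (onA_F HxA) HFy Hxy.
apply: (Span_step _ _ Hcut).
  by apply: Gamma_out => //; split.
have HrA : ~~ ((- BK y x *: x + BK x y *: y)%R <= A)%MS.
  apply/negP => Hr; move/negP: HyA; apply.
  apply: (comb_sub (u := (- BK y x *: x + BK x y *: y) + BK y x *: x) (a := -1) (b := BK x y)) => //.
    by apply/rowP => j; rewrite !mxE; ring.
  by apply: addmx_sub => //; apply: scalemx_sub.
apply: Gamma_out => //; split.
- by apply: contraNneq HrA => ->; rewrite sub0mx.
- by rewrite F2exp (onA_F HxA) HFy; ring.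
- by rewrite -[\sum_(m < 4) _]/(BK P _) Blin (onA_B P_on HxA) HPy !mulr0 addr0.
Qed.

Lemma span_r0 y r0 : y != 0 -> ~~ (y <= A)%MS -> FK y = 0 -> BK P y = 0 ->
  (r0 <= A)%MS -> ~~ (r0 <= P)%MS -> BK r0 y = 0 -> in_Span c (proj_point P) r0.
Proof.
move=> Hy0 HyA HFy HPy Hr0A Hr0P Hr0y.
have Hr0nz : r0 != 0 by apply: contraNneq Hr0P => ->; rewrite sub0mx.
have HPr := free2_of_sub P_nz (submx_refl P) Hr0P.
have HP0 := onA_F P_on.
have Hr00 := onA_F Hr0A.
have HPr0 := onA_B P_on Hr0A.
have Hr0P' := onA_B Hr0A P_on.
have HPP : BK P P = 0 by rewrite Bxx HP0 mulr0.
have Hrr : BK r0 r0 = 0 by rewrite Bxx Hr00 mulr0.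
have Hf3 : row_free (matL 3 [:: P; r0; y]).
  apply: free3_of => a b c0 E.
  have [c00|c00] := eqVneq c0 0.
    move: E; rewrite c00 scale0r addr0 => /HPr [-> ->]; by split.
  exfalso; move/negP: HyA; apply.
  apply: (comb_sub (u := a *: P + b *: r0) (a := 1) (b := c0)) => //.
    by rewrite scale1r.
  by apply: addmx_sub; apply: scalemx_sub.
have [g Hb] := complete (s := [:: P; r0; y]) erefl erefl Hf3.
rewrite /= in Hb.
pose Ty := TK P r0 y.
have HTy : Ty != 0.
  by apply/eqP => T0; exact: sing_contra P_on Hr0A Hb HPy T0 Hr0y.
have Hpg : BK P g != 0.
  apply/eqP => H0; have [m Hm] := smooth_K P_nz HP0; move/eqP: Hm; apply.
  by apply: (grad0 Hb) => -[[|[|[|[|//]]]] Hi] /=.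
have Hrg : BK r0 g != 0.
  apply/eqP => H0; have [m Hm] := smooth_K Hr0nz Hr00; move/eqP: Hm; apply.
  by apply: (grad0 Hb) => -[[|[|[|[|//]]]] Hi] /=.
have [t [Ht0 Ht]] := exists_t (BK r0 g) Hpg.
pose x1 := 1 *: P + t *: r0.
have Hx1A : (x1 <= A)%MS by apply: addmx_sub; apply: scalemx_sub.
have HFx1 := onA_F Hx1A.
pose q := BK x1 g.
pose f := q *: y + (- (t * Ty)) *: g.
have Bx1y : BK x1 y = t * Ty by rewrite /x1 B2exp HPy Hr0y; rewrite /Ty; ring.
have Bx1f : BK x1 f = 0 by rewrite /f Blin Bx1y -/q; ring.
pose Tf0 := TK x1 r0 f.
have ETf : Tf0 = Ty * (BK P g - t ^+ 2 * BK r0 g).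
  rewrite /Tf0 /f Tlin3 /x1 !Tlin1 /q B2exp !Txxy Hr0y /Ty; ring.
have HTf : Tf0 != 0 by rewrite ETf mulf_neq0 // subr_eq0 eq_sym.
pose b0 := BK r0 f.
have Eb0 : b0 = - (t * Ty) * BK r0 g by rewrite /b0 /f Blin Hr0y; ring.
have Hb0 : b0 != 0 by rewrite Eb0 !mulf_neq0 // oppr_eq0 mulf_neq0.
pose phi := BK f x1; pose psi := BK f r0; pose E := FK f.
have Hx1r0 := onA_B Hx1A Hr0A.
have Hr0x1 := onA_B Hr0A Hx1A.
have Hx1x1 : BK x1 x1 = 0 by rewrite Bxx HFx1 mulr0.
have Fzz : forall a b, FK (a *: x1 + b *: r0 + 1 *: f) = a * (phi + b * Tf0) + b0 * b ^+ 2 + psi * b + E.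
  move=> a b; rewrite F3exp HFx1 Hr00 Hx1r0 Hr0x1 Bx1f -/phi -/psi -/E -/b0 -/Tf0; ring.
have B1zz : forall a b, BK x1 (a *: x1 + b *: r0 + 1 *: f) = 0.
  by move=> a b; rewrite Blin3 Hx1x1 Hx1r0 Bx1f; ring.
have Bzz1 : forall a b, BK (a *: x1 + b *: r0 + 1 *: f) x1 = phi + b * Tf0.
  move=> a b; rewrite B3exp [TK x1 r0 x1]TC23 [TK x1 f x1]TC23 !Txxy Hx1r0 Bx1f Hx1x1 Hr0x1.
  rewrite [TK r0 f x1]TC23 [TK r0 x1 f]TC12 -/phi -/Tf0; ring.
have Bzzr : forall a b, BK (a *: x1 + b *: r0 + 1 *: f) r0 = psi + a * Tf0 + 2 * b * b0.
  move=> a b; rewrite B3exp [TK x1 r0 r0]TC12 [TK r0 x1 r0]TC23 [TK x1 f r0]TC23 [TK r0 f r0]TC23.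
  rewrite !Txxy Hr0x1 Hx1r0 Hrr -/psi -/Tf0 -/b0; ring.
have Brzz : forall a b, BK r0 (a *: x1 + b *: r0 + 1 *: f) = b0.
  by move=> a b; rewrite Blin3 Hr0x1 Hrr -/b0; ring.
have free_zz : forall al be a b, (al != 0) || (be != 0) ->
    free2 (al *: P + be *: r0) (a *: x1 + b *: r0 + 1 *: f).
  move=> al be a b Hab la mu Ec.
  have [] := free4_coef (a := la * al + mu * a) (b := la * be + mu * (a * t + b))
     (c := mu * q) (d := mu * (- (t * Ty))) Hb.
    by rewrite -Ec /x1 /f; apply/rowP => j; rewrite !mxE; ring.
  move=> E1 E2 _ /eqP; rewrite mulf_eq0 oppr_eq0 mulf_eq0 (negbTE Ht0) (negbTE HTy) !orbF.
  move/eqP => mu0; split => //; move: E1 E2; rewrite mu0 !mul0r !addr0 => /eqP E1 /eqP E2.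
  move: E1 E2; rewrite !mulf_eq0; case/orP: Hab => /negbTE -> ; rewrite ?orbF => /eqP // _ /eqP //.
have span_comb : forall a b, a != 0 -> in_Span c (proj_point P) (a *: P + b *: r0).
  move=> a b Ha.
  have Hnz : a *: P + b *: r0 != 0.
    by apply/eqP => /HPr [Ha0 _]; move/eqP: Ha.
  have [b00|b00] := eqVneq b 0.
    apply: Span_base; split; first exact: Hnz.
    by exists a; rewrite b00 scale0r addr0.
  apply: (span_l1 Hy0 HyA HFy HPy) => //.
    by apply: addmx_sub; apply: scalemx_sub.
  by rewrite B2exp HPy Hr0y -/Ty !mulr0 addr0 add0r !mulf_neq0.
pose b1 : K := if phi == 0 then 1 else 0.
pose n1 := b1 * Tf0 + phi.
have Hn1 : n1 != 0.
  rewrite /n1 /b1; have [->|H] := eqVneq phi 0; first by rewrite mul1r addr0.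
  by rewrite mul0r add0r.
pose tau := - (b0 * b1 ^+ 2 + psi * b1 + E) / n1.
pose b2 := - (tau * Tf0 + psi) / b0 - b1.
pose z1 := tau *: x1 + b1 *: r0 + 1 *: f.
pose z2 := tau *: x1 + b2 *: r0 + 1 *: f.
have HFz1 : FK z1 = 0 by rewrite /z1 Fzz /tau -/n1; rewrite /n1; field.
have Hb12 : tau * Tf0 + b0 * (b1 + b2) + psi = 0 by rewrite /b2; field.
have HFz2 : FK z2 = 0.
  rewrite /z2 Fzz.
  have -> : tau * (phi + b2 * Tf0) + b0 * b2 ^+ 2 + psi * b2 + E =
     (tau * (phi + b1 * Tf0) + b0 * b1 ^+ 2 + psi * b1 + E) +
     (b2 - b1) * (tau * Tf0 + b0 * (b1 + b2) + psi) by ring.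
  by rewrite -Fzz -/z1 HFz1 Hb12 mulr0 addr0.
have Hx1s : in_Span c (proj_point P) x1 by apply: span_comb; rewrite oner_eq0.
have Hz1s : in_Span c (proj_point P) z1.
  apply: (Span_step Hx1s Hx1s); apply: cut1 => //.
  - have := free_zz 1 t tau b1; rewrite oner_eq0; exact.
  - by rewrite /z1 B1zz.
  - by rewrite /z1 Bzz1 addrC.
pose x2 := b0 *: P + (b0 * t - Tf0) *: r0.
have Ex2 : x2 = b0 *: x1 + (- Tf0) *: r0 by rewrite /x2 /x1; apply/rowP => j; rewrite !mxE; ring.
have Hx2A : (x2 <= A)%MS by apply: addmx_sub; apply: scalemx_sub.
have Hx2s : in_Span c (proj_point P) x2 by apply: span_comb.
have Hz2s : in_Span c (proj_point P) z2.
  apply: (Span_step Hx2s Hx2s); apply: cut1 => //.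
  - by apply: free_zz; rewrite Hb0.
  - exact: onA_F.
  - rewrite /z2 Blin3 (onA_B Hx2A Hx1A) (onA_B Hx2A Hr0A) Ex2 B2exp Bx1f -/Tf0 -/b0; ring.
  - rewrite Ex2 Blin /z2 Bzz1 Bzzr.
    have -> : b0 * (phi + b2 * Tf0) + - Tf0 * (psi + tau * Tf0 + 2 * b2 * b0) =
      b0 * n1 - Tf0 * (tau * Tf0 + b0 * (b1 + b2) + psi) by rewrite /n1; ring.
    by rewrite Hb12 mulr0 subr0 mulf_neq0.
have Hfr : free2 r0 z1.
  have := free_zz 0 1 tau b1; rewrite oner_eq0 orbT scale0r add0r scale1r; exact.
apply: (Span_step Hz1s Hz2s (M := lin2 r0 z1)).
split; first exact: free2_line.
split; first exact: free2_nz2 Hfr.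
split.
  have := free_zz 0 1 tau b2; rewrite oner_eq0 orbT scale0r add0r scale1r => H.
  exact: free2_nz2 (H erefl).
split; first exact: free2_nz1 Hfr.
exists 0, 1, (- (b1 - b2)), 1, 1, 0, (- b0); split; rewrite ?lin2_0 ?lin2_1.
- by rewrite scale0r add0r scale1r.
- by rewrite /z2 /z1; apply/rowP => j; rewrite !mxE; ring.
- by rewrite scale1r scale0r addr0.
- by rewrite oppr_eq0.
rewrite line_form_lin2 Hr00 HFz1 /z1 Brzz Bzzr.
have -> : psi + tau * Tf0 + 2 * b1 * b0 = b0 * (b1 - b2).
  by rewrite /b2; field.
rewrite -mul_polyC !scale0r !scale1r !polyC0 polyCN polyC1 polyCM polyCN polyCB; ring.
Qed.

Theorem main_sec : (forall x, x != 0 -> (x <= A)%MS -> Gamma_pt c P x) /\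
  (forall x, Gamma_pt c P x -> in_Span c (proj_point P) x).
Proof.
split.
  move=> x Hx HxA; split => //; first exact: onA_F.
  exact: (onA_B P_on HxA).
move=> x Hg; case: (Hg) => Hx0 HFx HBx.
have [HxA|HxA] := boolP (x <= A)%MS; last exact: Gamma_out Hg HxA.
have [y [Hy0 HyA HFy HPy]] := exists_y.
have [Hxy|Hxy] := eqVneq (BK x y) 0; last exact: span_l1 Hy0 HyA HFy HPy HxA Hx0 Hxy.
have [HxP|HxP] := boolP (x <= P)%MS; last exact: span_r0 Hy0 HyA HFy HPy HxA HxP Hxy.
apply: Span_base; split => //; case/submxP: HxP => D ->; exists (D 0 0).
by rewrite {1}(mx11_scalar D) mul_scalar_mx.
Qed.

End Main.

Unset Implicit Arguments.

Theorem mainTheorem4 (K : fieldType) (L : closedFieldType)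
  (iota : {rmorphism K -> L})
  (L_alg : forall z : L, exists p : {poly K}, p != 0 /\ root (map_poly iota p) z)
  (K4 : exists a b d e : K, uniq [:: a; b; d; e])
  (c : cubic K) (smooth : smooth_cubic (map_cubic iota c))
  (A : 'M[K]_(2,4)) (lineA : is_line A)
  (A_in_S : line_in_surface (map_cubic iota c) (map_mx iota A))
  (P : 'rV[K]_4) (P_nz : P != 0) (P_on : (P <= A)%MS)
  (P_unique : forall B : 'M[L]_(2,4), is_line B ->
      line_in_surface (map_cubic iota c) B ->
      (map_mx iota P <= B)%MS -> (B == map_mx iota A)%MS) :
  (forall x : 'rV[K]_4, x != 0 -> (x <= A)%MS -> Gamma_pt c P x) /\
  (forall x : 'rV[K]_4, Gamma_pt c P x -> in_Span c (proj_point P) x).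
Proof. exact (@main_sec K L iota K4 c smooth A lineA A_in_S P P_nz P_on P_unique). Qed.
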